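(* Let $F\subset\mathbb{R}^N$ be a self-similar fractal, i.e. the attractor (nonempty compact set with $F=\bigcup_{i=1}^m w_i(F)$) of a finite family of contracting similarities $w_1,\dots,w_m$ of $\mathbb{R}^N$. Let $w$ be one of the $w_i$ and let $x$ be its fixed point, $x=wx$. Then the tangent cone $\mathcal{T}_xF$ consists exactly of all dilations of $Z=\overline{\bigcup_{n\in\mathbb{N}}w^{-n}F}$, i.e. of the pointed metric spaces $(Z,x,c\,d)$, $c>0$, where $d$ is the Euclidean metric.
   Context: For a metric space $(X,d)$, $x\in X$ and $t>0$, $(X,x,td)$ denotes $X$ with metric $td$ and base point $x$. A tangent set of $X$ at $x$ is any limit point, as $t\to\infty$, of $(X,x,td)$ in the pointed Gromov–Hausdorff topology (on isometry classes of pointed proper metric spaces); the tangent cone $\mathcal{T}_xX$ is the family of all tangent sets of $X$ at $x$. *)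

(* Defs.v *)
From Stdlib Require Import Reals.
From mathcomp Require Import all_boot.
Set Implicit Arguments. Unset Strict Implicit. Unset Printing Implicit Defensive.
Local Open Scope R_scope.

Definition pt (N : nat) := 'I_N -> R.

Definition edist (N : nat) (x y : pt N) : R :=
  sqrt (\big[Rplus/0]_(i < N) ((x i - y i) ^ 2)).

Definition contracting_similarity (N : nat) (w : pt N -> pt N) : Prop :=
  exists r : R, 0 < r < 1 /\ forall x y, edist (w x) (w y) = r * edist x y.

Definition seq_compact (N : nat) (K : pt N -> Prop) : Prop :=
  forall u : nat -> pt N, (forall n, K (u n)) ->
    exists (phi : nat -> nat) (l : pt N),
      (forall n, (phi n < phi n.+1)%N) /\ K l /\
      forall eps, 0 < eps -> exists n0, forall n, (n0 <= n)%N ->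
        edist (u (phi n)) l < eps.

Definition is_attractor (N m : nat) (ws : 'I_m -> pt N -> pt N)
    (F : pt N -> Prop) : Prop :=
  (exists y, F y) /\ seq_compact F /\
  forall y, F y <-> exists (i : 'I_m) (z : pt N), F z /\ y = ws i z.

Definition eclosure (N : nat) (S : pt N -> Prop) : pt N -> Prop :=
  fun y => forall eps, 0 < eps -> exists z, S z /\ edist y z < eps.

(** Z = closure of the union over n of w^{-n} F  (w^{-n} F = preimage of F
    under the n-th iterate of w). *)
Definition Zset (N : nat) (w : pt N -> pt N) (F : pt N -> Prop) : pt N -> Prop :=
  eclosure (fun y => exists n : nat, F (iter n w y)).

Record metric_space := MetricSpace {
  msT :> Type;
  mdist : msT -> msT -> R;
  mdist_ge0 : forall a b, 0 <= mdist a b;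
  mdist_eq0 : forall a b, mdist a b = 0 <-> a = b;
  mdist_sym : forall a b, mdist a b = mdist b a;
  mdist_tri : forall a b c, mdist a c <= mdist a b + mdist b c
}.

Definition proper_space (Y : metric_space) : Prop :=
  forall (c : Y) (r : R) (u : nat -> Y), (forall n, mdist c (u n) <= r) ->
    exists (phi : nat -> nat) (l : Y),
      (forall n, (phi n < phi n.+1)%N) /\
      forall eps, 0 < eps -> exists n0, forall n, (n0 <= n)%N ->
        mdist (u (phi n)) l < eps.

(** Pointed Gromov-Hausdorff convergence (Burago-Burago-Ivanov, Def. 8.1.1)
    of the sequence of pointed metric spaces (S, p n, dn n), where S is a
    subset of a type A, to the pointed metric space (Y, q):
    for all r, eps > 0, for all large n there is f : B_r(p n) -> Y with
    f (p n) = q, distortion < eps, and B_{r-eps}(q) contained in the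
    eps-neighbourhood of f(B_r(p n)). *)
Definition pGH_conv (A : Type) (S : A -> Prop) (dn : nat -> A -> A -> R)
    (p : nat -> A) (Y : metric_space) (q : Y) : Prop :=
  forall r eps, 0 < r -> 0 < eps -> exists n0, forall n, (n0 <= n)%N ->
    exists f : A -> Y,
      f (p n) = q /\
      (forall a b, S a -> S b -> dn n (p n) a < r -> dn n (p n) b < r ->
         Rabs (mdist (f a) (f b) - dn n a b) < eps) /\
      (forall y : Y, mdist q y < r - eps ->
         exists a, S a /\ dn n (p n) a < r /\ mdist (f a) y < eps).

(** (Y, q) is a tangent set of F (with the Euclidean metric) at x: a limit
    point, as t -> oo, of (F, x, t d) in the pointed GH topology, i.e. the
    pGH limit of (F, x, t_n d) along some sequence t_n -> +oo. *)
Definition tangent_set (N : nat) (F : pt N -> Prop) (x : pt N)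
    (Y : metric_space) (q : Y) : Prop :=
  proper_space Y /\
  exists t : nat -> R,
    (forall M, exists n0, forall n, (n0 <= n)%N -> M < t n) /\
    pGH_conv F (fun n a b => t n * edist a b) (fun _ => x) q.

Definition pointed_isometric_to_dilation (N : nat) (Z : pt N -> Prop)
    (x : pt N) (c : R) (Y : metric_space) (q : Y) : Prop :=
  exists g : Y -> pt N,
    g q = x /\ (forall a, Z (g a)) /\ (forall z, Z z -> exists a, g a = z) /\
    forall a b, mdist a b = c * edist (g a) (g b).

(* Main.v *)
From HB Require Import structures.
Require Import Defs.
From Stdlib Require Import Reals Lra Psatz FunctionalExtensionality ClassicalEpsilon.
From mathcomp Require Import all_boot.
From mathcomp Require boolp classical_sets filter.
Local Open Scope R_scope.


Lemma Rplus_assoc' : associative Rplus.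
Proof. move=> a b c; ring. Qed.
Lemma Rplus_comm' : commutative Rplus.
Proof. move=> a b; ring. Qed.
Lemma Rplus_0_l' : left_id 0 Rplus.
Proof. move=> a; ring. Qed.
HB.instance Definition _ := Monoid.isComLaw.Build R 0 Rplus Rplus_assoc' Rplus_comm' Rplus_0_l'.

Definition sm {n : nat} (F : 'I_n -> R) := \big[Rplus/0]_(i < n) F i.

Lemma sm0 (F : 'I_0 -> R) : sm F = 0.
Proof. by rewrite /sm big_ord0. Qed.

Lemma smS {n} (F : 'I_n.+1 -> R) :
  sm F = sm (fun i : 'I_n => F (widen_ord (leqnSn n) i)) + F ord_max.
Proof. by rewrite /sm big_ord_recr. Qed.

Lemma sm_le {n} (F G : 'I_n -> R) : (forall i, F i <= G i) -> sm F <= sm G.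
Proof.
elim: n F G => [|n IH] F G H; first by rewrite !sm0; lra.
rewrite !smS; apply Rplus_le_compat; [apply IH => i|]; apply H.
Qed.

Lemma sm_nonneg {n} (F : 'I_n -> R) : (forall i, 0 <= F i) -> 0 <= sm F.
Proof.
move=> H; have -> : 0 = sm (fun _ : 'I_n => 0).
  elim: n {F H} => [|n IH]; first by rewrite sm0.
  by rewrite smS -IH; lra.
by apply sm_le.
Qed.

Lemma sm_add {n} (F G : 'I_n -> R) : sm (fun i => F i + G i) = sm F + sm G.
Proof.
elim: n F G => [|n IH] F G; first by rewrite !sm0; lra.
rewrite !smS IH; lra.
Qed.

Lemma sm_scal {n} (k : R) (F : 'I_n -> R) : sm (fun i => k * F i) = k * sm F.
Proof.
elim: n F => [|n IH] F; first by rewrite !sm0; lra.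
rewrite !smS IH; lra.
Qed.

Lemma sm_const_le {n} (F : 'I_n -> R) c : (forall i, F i <= c) -> sm F <= INR n * c.
Proof.
elim: n F => [|n IH] F H; first by rewrite sm0 /=; lra.
rewrite smS S_INR.
have := IH (fun i : 'I_n => F (widen_ord (leqnSn n) i)) (fun i => H _).
have := H ord_max; lra.
Qed.

Lemma sm_ge_term {n} (F : 'I_n -> R) j : (forall i, 0 <= F i) -> F j <= sm F.
Proof.
elim: n F j => [|n IH] F j H; first by case: j.
rewrite smS.
case: (ltnP j n) => hj.
  have -> : j = widen_ord (leqnSn n) (Ordinal hj) by apply: val_inj.
  have := IH (fun i : 'I_n => F (widen_ord (leqnSn n) i)) (Ordinal hj) (fun i => H _).
  have := H ord_max; lra.
have -> : j = ord_max.
  apply: val_inj => /=; have := ltn_ord j; rewrite ltnS => h2.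
  by apply/eqP; rewrite eqn_leq h2 hj.
have := sm_nonneg (fun i : 'I_n => F (widen_ord (leqnSn n) i)) (fun i => H _); lra.
Qed.

Definition sq (a : R) := a * a.
Lemma sq_ge0 a : 0 <= sq a.
Proof. rewrite /sq; nra. Qed.

Lemma edistE {N} (x y : pt N) : edist x y = sqrt (sm (fun i => sq (x i - y i))).
Proof.
rewrite /edist /sm /sq; congr sqrt; apply: eq_bigr => i _; ring.
Qed.

Lemma ed_ge0 {N} (x y : pt N) : 0 <= edist x y.
Proof. rewrite /edist; apply sqrt_pos. Qed.

Lemma ed_sq {N} (x y : pt N) : sq (edist x y) = sm (fun i => sq (x i - y i)).
Proof.
rewrite edistE /sq sqrt_sqrt //; apply sm_nonneg => i; apply sq_ge0.
Qed.

Lemma ed_refl {N} (x : pt N) : edist x x = 0.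
Proof.
rewrite edistE; rewrite -sqrt_0; congr sqrt.
elim: N x => [|n IH] x; first by rewrite sm0.
rewrite smS.
have := IH (fun i : 'I_n => x (widen_ord (leqnSn n) i)).
rewrite /sq => ->; ring.
Qed.

Lemma ed_sym {N} (x y : pt N) : edist x y = edist y x.
Proof. rewrite !edistE; congr sqrt; rewrite /sm; apply: eq_bigr => i _; rewrite /sq; ring. Qed.

Lemma ed_coord {N} (x y : pt N) i : Rabs (x i - y i) <= edist x y.
Proof.
rewrite edistE; apply Rsqr_incr_0_var; last by apply sqrt_pos.
rewrite Rsqr_sqrt; last by apply sm_nonneg => j; apply sq_ge0.
rewrite -Rsqr_abs; apply (sm_ge_term (fun i => sq (x i - y i))) => j; apply sq_ge0.
Qed.

Lemma ed_eq0 {N} (x y : pt N) : edist x y = 0 -> x = y.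
Proof.
move=> H; apply: functional_extensionality => i.
have := ed_coord x y i; rewrite H => h.
have := Rabs_pos (x i - y i); move=> h2.
have h3 : Rabs (x i - y i) = 0 by lra.
case: (Req_dec (x i - y i) 0) => h4; first lra.
by have := Rabs_no_R0 _ h4.
Qed.

Lemma sm_sq0 {n} (F : 'I_n -> R) : sm (fun i => sq (F i)) = 0 -> forall i, F i = 0.
Proof.
move=> H i; have := sm_ge_term (fun i => sq (F i)) i.
rewrite H /sq => h; have : F i * F i <= 0 by apply h => j; nra.
nra.
Qed.

Lemma cauchy_schwarz {n} (a b : 'I_n -> R) :
  sm (fun i => a i * b i) <= sqrt (sm (fun i => sq (a i))) * sqrt (sm (fun i => sq (b i))).
Proof.
set SA := sm (fun i => sq (a i)); set SB := sm (fun i => sq (b i)).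
have hA : 0 <= SA by apply sm_nonneg => i; apply sq_ge0.
have hB : 0 <= SB by apply sm_nonneg => i; apply sq_ge0.
set A := sqrt SA; set B := sqrt SB.
have eA : A * A = SA by apply sqrt_sqrt.
have eB : B * B = SB by apply sqrt_sqrt.
have A0 : 0 <= A by apply sqrt_pos.
have B0 : 0 <= B by apply sqrt_pos.
case: (Req_dec A 0) => Az.
  have : SA = 0 by rewrite -eA Az; ring.
  move/sm_sq0 => a0.
  have -> : sm (fun i => a i * b i) = sm (fun i => 0 * b i)
    by rewrite /sm; apply: eq_bigr => i _; rewrite a0.
  rewrite sm_scal; nra.
case: (Req_dec B 0) => Bz.
  have : SB = 0 by rewrite -eB Bz; ring.
  move/sm_sq0 => b0.
  have -> : sm (fun i => a i * b i) = sm (fun i => 0 * a i)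
    by rewrite /sm; apply: eq_bigr => i _; rewrite b0; ring.
  rewrite sm_scal; nra.
have key : 2 * (A * B) * sm (fun i => a i * b i) <= B * B * SA + A * A * SB.
  rewrite -sm_scal /SA /SB -!sm_scal -sm_add; apply sm_le => i; cbv beta.
  have := sq_ge0 (B * a i - A * b i); rewrite /sq; nra.
have AB : 0 < A * B by apply Rmult_lt_0_compat; lra.
rewrite -eA -eB in key.
have : (A * B) * (2 * sm (fun i => a i * b i)) <= (A * B) * (2 * (A * B)) by nra.
move/(Rmult_le_reg_l _ _ _ AB); lra.
Qed.

Lemma ed_tri {N} (x y z : pt N) : edist x z <= edist x y + edist y z.
Proof.
apply Rsqr_incr_0_var; last by have := ed_ge0 x y; have := ed_ge0 y z; lra.
rewrite /Rsqr.
have := ed_sq x z; rewrite /sq => ->.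
have e1 := ed_sq x y; have e2 := ed_sq y z; rewrite /sq in e1 e2.
have cs := cauchy_schwarz (fun i => x i - y i) (fun i => y i - z i).
rewrite -!edistE in cs.
have -> : sm (fun i => sq (x i - z i)) =
   sm (fun i => sq (x i - y i)) + sm (fun i => sq (y i - z i)) + 2 * sm (fun i => (x i - y i) * (y i - z i)).
  rewrite -sm_scal -!sm_add; rewrite /sm; apply: eq_bigr => i _; rewrite /sq; ring.
rewrite /sq in e1 e2 |- *; rewrite -e1 -e2; nra.
Qed.

Lemma ed_bound {N} (x y : pt N) d : 0 <= d -> (forall i, Rabs (x i - y i) <= d) ->
  edist x y <= sqrt (INR N) * d.
Proof.
move=> d0 H; rewrite edistE.
rewrite -(sqrt_Rsqr d) // -sqrt_mult; [|apply pos_INR|apply Rle_0_sqr].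
apply sqrt_le_1_alt; apply sm_const_le => i.
rewrite /sq /Rsqr; have := H i; have := Rabs_pos (x i - y i).
have -> : (x i - y i) * (x i - y i) = Rabs (x i - y i) * Rabs (x i - y i).
  rewrite -Rabs_mult Rabs_pos_eq //; apply sq_ge0.
move=> h1 h2; nra.
Qed.

Definition isU (U : (nat -> Prop) -> Prop) : Prop :=
  U (fun _ => True) /\
  (forall A B, U A -> U B -> U (fun n => A n /\ B n)) /\
  (forall A B : nat -> Prop, (forall n, A n -> B n) -> U A -> U B) /\
  ~ U (fun _ => False) /\
  (forall A, U A \/ U (fun n => ~ A n)) /\
  (forall A : nat -> Prop, (exists n0, forall n, (n0 <= n)%N -> A n) -> U A).


Lemma U_I {U} (HU : isU U) {A B} : U A -> U B -> U (fun n => A n /\ B n).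
Proof. by case: HU => _ [H _]; apply H. Qed.
Lemma U_S {U} (HU : isU U) {A B : nat -> Prop} : (forall n, A n -> B n) -> U A -> U B.
Proof. by case: HU => _ [_ [H _]]; apply H. Qed.
Lemma U_ult {U} (HU : isU U) A : U A \/ U (fun n => ~ A n).
Proof. by case: HU => _ [_ [_ [_ [H _]]]]; apply H. Qed.
Lemma U_cof {U} (HU : isU U) {A : nat -> Prop} : (exists n0, forall n, (n0 <= n)%N -> A n) -> U A.
Proof. by case: HU => _ [_ [_ [_ [_ H]]]]; apply H. Qed.
Lemma U_ne {U} (HU : isU U) {A} : U A -> exists n, A n.
Proof.
move=> HA; case: (classic (exists n, A n)) => // H.
case: HU => _ [_ [HS [H0 _]]]; exfalso; apply: H0.
by apply: (HS A) => // n An; apply H; exists n.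
Qed.
Lemma U_inf {U} (HU : isU U) {A} : U A -> forall n0, exists n, (n0 <= n)%N /\ A n.
Proof.
move=> HA n0.
have : U (fun n => (n0 <= n)%N /\ A n).
  have h0 : U (fun n => is_true (n0 <= n)%N) by apply: (U_cof HU); exists n0.
  exact: (U_I HU h0 HA).
by move/(U_ne HU).
Qed.
Lemma U_not {U} (HU : isU U) {A} : ~ U A -> U (fun n => ~ A n).
Proof. by case: (U_ult HU A). Qed.

Lemma U_forall_ord {U} (HU : isU U) N (P : 'I_N -> nat -> Prop) :
  (forall i, U (P i)) -> U (fun n => forall i, P i n).
Proof.
move=> H.
have : forall s : seq 'I_N, U (fun n => forall i, i \in s -> P i n).
  elim=> [|a s IH].
    by apply: (U_cof HU); exists 0%N => n _ i; rewrite in_nil.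
  apply: (U_S HU _ (U_I HU (H a) IH)) => n [Ha Hs] i.
  by rewrite in_cons => /orP [/eqP ->|]; [|apply Hs].
move=> /(_ (enum 'I_N)); apply: (U_S HU) => n Hn i; apply Hn.
by rewrite mem_enum.
Qed.

Lemma ulim_R {U} (HU : isU U) (u : nat -> R) M :
  U (fun n => Rabs (u n) <= M) ->
  exists l, forall eps, 0 < eps -> U (fun n => Rabs (u n - l) < eps).
Proof.
move=> HM.
pose E := fun a => U (fun n => a <= u n).
have Eb : bound E.
  exists M => a Ea; case: (Rle_lt_dec a M) => // h; exfalso.
  have := U_ne HU (U_I HU Ea HM); case=> n [h1 h2].
  have := Rle_abs (u n); lra.
have Ene : exists a, E a.
  exists (- M); apply: (U_S HU _ HM) => n h.
  have := Rabs_Ropp (u n); have := Rle_abs (- u n); lra.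
have [l [Hub Hlub]] := completeness E Eb Ene.
exists l => eps he.
have h1 : U (fun n => l - eps < u n).
  have [a [Ea Ha]] : exists a, E a /\ l - eps < a.
    apply: NNPP => H.
    have : l <= l - eps.
      apply Hlub => a Ea; case: (Rle_lt_dec a (l - eps)) => // h; exfalso; apply H; by exists a.
    lra.
  apply: (U_S HU _ Ea) => n; lra.
have h2 : U (fun n => u n < l + eps).
  have : ~ E (l + eps / 2).
    move=> Ee; have := Hub _ Ee; lra.
  move/(U_not HU); apply: (U_S HU) => n h; lra.
apply: (U_S HU _ (U_I HU h1 h2)) => n [a b].
apply Rabs_def1; lra.
Qed.

Lemma ulim_RN {U} (HU : isU U) {N} (z : nat -> pt N) (c : pt N) M :
  U (fun n => edist c (z n) <= M) ->
  exists l, forall eps, 0 < eps -> U (fun n => edist (z n) l < eps).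
Proof.
move=> HM.
have H1 : forall i, exists li, forall eps, 0 < eps -> U (fun n => Rabs (z n i - li) < eps).
  move=> i; apply: (ulim_R HU (z ^~ i) (Rabs (c i) + M)).
  apply: (U_S HU _ HM) => n h.
  have := ed_coord c (z n) i; have := Rabs_triang (c i) (z n i - c i).
  rewrite Rabs_minus_sym.
  have -> : c i + (z n i - c i) = z n i by ring.
  lra.
have [l Hl] : exists l : pt N, forall i eps, 0 < eps -> U (fun n => Rabs (z n i - l i) < eps).
  exists (fun i => proj1_sig (constructive_indefinite_description _ (H1 i))).
  move=> i; exact: (proj2_sig (constructive_indefinite_description _ (H1 i))).
exists l => eps he.
have sN := sqrt_pos (INR N).
set d := eps / (sqrt (INR N) + 1).
have d0 : 0 < d by apply Rdiv_lt_0_compat; lra.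
have := U_forall_ord HU N (fun i n => Rabs (z n i - l i) < d) (fun i => Hl i d d0).
apply: (U_S HU) => n Hn.
have := ed_bound (z n) l d (Rlt_le _ _ d0) (fun i => Rlt_le _ _ (Hn i)).
have : sqrt (INR N) * d < eps.
  rewrite /d; apply (Rmult_lt_reg_r (sqrt (INR N) + 1)); first lra.
  field_simplify; lra.
lra.
Qed.

Lemma inv_small eps : 0 < eps -> exists K, forall k, (K <= k)%N -> / INR (S k) < eps.
Proof.
move=> he; have [K HK] := INR_archimed 1 (/ eps) Rlt_0_1.
exists K => k hk.
have hK : INR K <= INR k by apply le_INR; apply/leP.
rewrite S_INR.
have h0 : 0 < INR k + 1 by have := pos_INR k; lra.
rewrite -(Rinv_inv eps); apply Rinv_lt_contravar.
  apply Rmult_lt_0_compat => //; by apply Rinv_0_lt_compat.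
lra.
Qed.

Lemma phi_ge (phi : nat -> nat) : (forall n, (phi n < phi n.+1)%N) -> forall n, (n <= phi n)%N.
Proof.
move=> H; elim=> [|n IH] //; apply: leq_ltn_trans IH (H n).
Qed.

Lemma mtri {Y : metric_space} (a b c : Y) : mdist a c <= mdist a b + mdist b c.
Proof. apply mdist_tri. Qed.

Definition pickn (P : nat -> Prop) : nat := epsilon (inhabits 0%N) P.

Lemma Y_net {U} (HU : isU U) (Y : metric_space) (HY : proper_space Y)
  (u : nat -> Y) (c0 : Y) R : (forall n, mdist c0 (u n) <= R) ->
  forall eps, 0 < eps -> exists m, U (fun n => mdist (u n) (u m) < eps).
Proof.
move=> Hb eps he; apply: NNPP => Hn.
have H : forall m, U (fun n => ~ mdist (u n) (u m) < eps).
  move=> m; apply: (U_not HU) => Hm; apply Hn; by exists m.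
pose P (l : seq nat) := fun n => forall m, m \in l -> ~ mdist (u n) (u m) < eps.
have HP : forall l, exists n, P l n.
  move=> l; apply: (U_ne HU).
  elim: l => [|a l IH].
    by apply: (U_cof HU); exists 0%N => n _ m; rewrite in_nil.
  apply: (U_S HU _ (U_I HU (H a) IH)) => n [Ha Hl] m.
  by rewrite in_cons => /orP [/eqP ->|]; [|apply Hl].
pose fix pre (k : nat) : seq nat :=
  match k with 0%N => [::] | S k => rcons (pre k) (pickn (P (pre k))) end.
pose idx k := pickn (P (pre k)).
have Hidx : forall k, P (pre k) (idx k).
  by move=> k; rewrite /idx /pickn; apply epsilon_spec; apply HP.
have Hin : forall k i, (i < k)%N -> idx i \in pre k.
  elim=> [|k IH] i //=; rewrite ltnS leq_eqVlt => /orP [/eqP ->|hi].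
    by rewrite mem_rcons mem_head.
  by rewrite mem_rcons in_cons (IH _ hi) orbT.
have Hsep : forall i k, (i < k)%N -> eps <= mdist (u (idx k)) (u (idx i)).
  move=> i k hik; have := Hidx k (idx i) (Hin _ _ hik); lra.
have [phi [l [Hphi Hl]]] := HY c0 R (fun k => u (idx k)) (fun k => Hb _).
have [n0 Hn0] := Hl (eps / 2) ltac:(lra).
have h1 := Hn0 n0 (leqnn _).
have h2 := Hn0 n0.+1 (leqnSn _).
have h3 := Hsep _ _ (Hphi n0).
have := mtri (u (idx (phi n0.+1))) l (u (idx (phi n0))).
rewrite (mdist_sym l); lra.
Qed.

Lemma ulim_Y {U} (HU : isU U) (Y : metric_space) (HY : proper_space Y)
  (u : nat -> Y) (c0 : Y) R : (forall n, mdist c0 (u n) <= R) ->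
  exists l, forall eps, 0 < eps -> U (fun n => mdist (u n) l < eps).
Proof.
move=> Hb.
have H1 : forall k, exists m, U (fun n => mdist (u n) (u m) < / INR (S k)).
  move=> k; apply: (Y_net HU _ HY _ _ _ Hb (/ INR (S k))); apply Rinv_0_lt_compat, lt_0_INR; lia.
pose m k := proj1_sig (constructive_indefinite_description _ (H1 k)).
have Hm : forall k, U (fun n => mdist (u n) (u (m k)) < / INR (S k)).
  move=> k; exact: (proj2_sig (constructive_indefinite_description _ (H1 k))).
have [phi [l [Hphi Hl]]] := HY c0 R (fun k => u (m k)) (fun k => Hb _).
exists l => eps he.
have [n0 Hn0] := Hl (eps / 2) ltac:(lra).
have [K HK] := inv_small (eps / 2) ltac:(lra).
set k' := maxn n0 K.
have hk1 := Hn0 k' (leq_maxl _ _).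
have hk2 := HK (phi k') (leq_trans (leq_maxr n0 K) (phi_ge _ Hphi k')).
apply: (U_S HU _ (Hm (phi k'))) => n hn.
have := mtri (u n) (u (m (phi k'))) l; lra.
Qed.

Definition simr {N} (w : pt N -> pt N) r :=
  0 < r < 1 /\ forall a b, edist (w a) (w b) = r * edist a b.

Lemma small0 a : 0 <= a -> (forall eps, 0 < eps -> a < eps) -> a = 0.
Proof.
move=> h0 h; case: (Req_dec a 0) => // hn.
have := h (a / 2) ltac:(lra); lra.
Qed.

Lemma ed_small0 {N} (a b : pt N) : (forall eps, 0 < eps -> edist a b < eps) -> a = b.
Proof. move=> h; apply ed_eq0, small0 => //; apply ed_ge0. Qed.

Lemma sim_inj {N} {w : pt N -> pt N} {r} : simr w r -> forall a b, w a = w b -> a = b.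
Proof.
move=> [hr Hw] a b e; apply ed_eq0.
have := Hw a b; rewrite e ed_refl => h.
have := ed_ge0 a b; nra.
Qed.

Lemma sim_iter {N} {w : pt N -> pt N} {r} : simr w r -> forall n a b,
  edist (iter n w a) (iter n w b) = r ^ n * edist a b.
Proof.
move=> [hr Hw]; elim=> [|n IH] a b /=; first ring.
by rewrite Hw IH; ring.
Qed.

Lemma iter_fix {T} (f : T -> T) x : f x = x -> forall n, iter n f x = x.
Proof. by move=> h; elim=> [|n IH] //=; rewrite IH h. Qed.

Lemma ed_affine {N} (x a b : pt N) r : 0 < r ->
  edist (fun i => x i + (a i - x i) / r) (fun i => x i + (b i - x i) / r) = edist a b / r.
Proof.
move=> hr; rewrite !edistE.
have -> : sm (fun i => sq (x i + (a i - x i) / r - (x i + (b i - x i) / r)))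
        = sm (fun i => (/ r * / r) * sq (a i - b i)).
  rewrite /sm; apply: eq_bigr => i _; rewrite /sq; field; lra.
rewrite sm_scal sqrt_mult; [|nra|apply sm_nonneg => i; apply sq_ge0].
rewrite sqrt_square; [rewrite /Rdiv; ring|].
apply Rlt_le, Rinv_0_lt_compat; lra.
Qed.

Lemma sim_surj {U} (HU : isU U) {N} (w : pt N -> pt N) r x :
  simr w r -> w x = x -> forall p, exists z, w z = p.
Proof.
move=> Hs Hx.
have [hr Hw] := Hs.
pose L := fun v : pt N => (fun i => x i + (w v i - x i) / r).
have HL : forall a b, edist (L a) (L b) = edist a b.
  move=> a b; rewrite /L ed_affine; [rewrite Hw; field|]; lra.
have Lx : L x = x.
  apply: functional_extensionality => i; rewrite /L Hx; field; lra.
have HLn : forall n a b, edist (iter n L a) (iter n L b) = edist a b.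
  by elim=> [|n IH] a b //=; rewrite HL IH.
have Lsurj : forall p, exists z, L z = p.
  move=> p; apply: NNPP => Hn.
  have [del [hd Hdel]] : exists del, 0 < del /\ forall z, del <= edist (L z) p.
    apply: NNPP => Hd; apply: Hn.
    have H1 : forall m : nat, exists z, edist (L z) p < / INR (S m).
      move=> m; apply: NNPP => Hm; apply: Hd; exists (/ INR (S m)); split.
        apply Rinv_0_lt_compat, lt_0_INR; lia.
      move=> z; case: (Rle_lt_dec (/ INR (S m)) (edist (L z) p)) => // h.
      by exfalso; apply Hm; exists z.
    pose zs m := proj1_sig (constructive_indefinite_description _ (H1 m)).
    have Hzs : forall m, edist (L (zs m)) p < / INR (S m).
      move=> m; exact: (proj2_sig (constructive_indefinite_description _ (H1 m))).
    have Hb : U (fun m => edist x (zs m) <= edist x p + 1).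
      apply: (U_cof HU); exists 0%N => m _.
      rewrite -HL Lx.
      have := ed_tri (L x) p (L (zs m)); rewrite Lx (ed_sym p).
      have := Hzs m.
      have : / INR (S m) <= 1.
        rewrite -Rinv_1; apply Rinv_le_contravar; first lra.
        rewrite S_INR; have := pos_INR m; lra.
      lra.
    have [z Hz] := ulim_RN HU zs x _ Hb.
    exists z; apply: ed_small0 => eps he.
    have [K HK] := inv_small (eps / 2) ltac:(lra).
    have h2 : U (fun m => (K <= m)%N) by apply: (U_cof HU); exists K.
    have [m [hm1 hm2]] := U_ne HU (U_I HU (Hz (eps / 2) ltac:(lra)) h2).
    have := ed_tri (L z) (L (zs m)) p; rewrite HL (ed_sym z).
    have := HK m hm2; have := Hzs m; lra.
  pose o n := iter n L p.
  have Hb : U (fun n => edist x (o n) <= edist x p).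
    apply: (U_cof HU); exists 0%N => n _; rewrite /o.
    have := HLn n x p; rewrite (iter_fix _ _ Lx) => ->; lra.
  have [os Hos] := ulim_RN HU o x _ Hb.
  have HA := Hos (del / 2) ltac:(lra).
  have [i Hi] := U_ne HU HA.
  have [j [hj Hj]] := U_inf HU HA i.+1.
  have : edist (o i) (o j) < del.
    have := ed_tri (o i) os (o j); rewrite (ed_sym os); lra.
  have -> : j = (i + (j - i.+1).+1)%N by rewrite addnS -addSn subnKC.
  rewrite /o iterD HLn.
  have -> : iter (j - i.+1).+1 L p = L (iter (j - i.+1) L p) by [].
  rewrite ed_sym; have := Hdel (iter (j - i.+1) L p); lra.
move=> p.
have [z Hz] := Lsurj (fun i => x i + (p i - x i) / r).
exists z; apply: functional_extensionality => i.
have := f_equal (fun f => f i) Hz; rewrite /L /= => h.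
have : (w z i - x i) / r = (p i - x i) / r by lra.
move=> h2; have : w z i - x i = p i - x i.
  have := f_equal (fun t => t * r) h2; rewrite /Rdiv !Rmult_assoc Rinv_l; lra.
lra.
Qed.

Lemma iter_stable {T} {F : T -> Prop} {w : T -> T} : (forall z, F z -> F (w z)) ->
  forall n z, F z -> F (iter n w z).
Proof. by move=> H; elim=> [|n IH] z hz //=; apply H, IH. Qed.

Lemma iter_mono {T} {F : T -> Prop} {w : T -> T} : (forall z, F z -> F (w z)) ->
  forall j k p, (j <= k)%N -> F (iter j w p) -> F (iter k w p).
Proof.
move=> H j k p hjk hF.
rewrite -(subnK hjk) iterD; exact: iter_stable.
Qed.

Lemma iter_inv {T} {w wi : T -> T} : (forall p, w (wi p) = p) ->
  forall n p, iter n w (iter n wi p) = p.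
Proof.
move=> H; elim=> [|n IH] p //.
by rewrite iterSr /= H IH.
Qed.

Lemma rpow_pos r n : 0 < r -> 0 < r ^ n.
Proof. move=> h; by apply pow_lt. Qed.

Lemma iter_inv2 {N} {w wi : pt N -> pt N} {r} : simr w r -> (forall p, w (wi p) = p) ->
  forall n z, iter n wi (iter n w z) = z.
Proof.
move=> Hs H n z; apply ed_eq0.
have := sim_iter Hs n (iter n wi (iter n w z)) z.
rewrite iter_inv // ed_refl => h.
have := rpow_pos _ n (proj1 (proj1 Hs)).
have := ed_ge0 (iter n wi (iter n w z)) z; nra.
Qed.

Lemma wi_fix {N} {w wi : pt N -> pt N} {r x} : simr w r -> (forall p, w (wi p) = p) ->
  w x = x -> forall n, iter n wi x = x.
Proof.
move=> Hs H Hx; apply: iter_fix.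
apply: (sim_inj Hs); by rewrite H Hx.
Qed.

Lemma x_in_F {N} (w : pt N -> pt N) r x (F : pt N -> Prop) : simr w r -> w x = x ->
  (exists y, F y) -> seq_compact F -> (forall z, F z -> F (w z)) -> F x.
Proof.
move=> Hs Hx [y0 Fy0] HK Hst.
have [phi [l [Hphi [Fl Hl]]]] := HK (fun n => iter n w y0) (fun n => iter_stable Hst n y0 Fy0).
suff -> : x = l by [].
apply: ed_small0 => eps he.
have [n0 Hn0] := Hl (eps / 2) ltac:(lra).
have hr := proj1 Hs.
case: (Req_dec (edist y0 x) 0) => hy.
  have := Hn0 n0 (leqnn _); cbv beta => h0.
  have := sim_iter Hs (phi n0) y0 x; rewrite hy Rmult_0_r (iter_fix _ _ Hx) => e.
  have := ed_tri x (iter (phi n0) w y0) l; rewrite (ed_sym x (iter (phi n0) w y0)) e; lra.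
have hy0 : 0 < edist y0 x by have := ed_ge0 y0 x; lra.
have [K HK'] := pow_lt_1_zero r ltac:(rewrite Rabs_pos_eq; lra) (eps / 2 / edist y0 x)
  ltac:(apply Rdiv_lt_0_compat; lra).
set n := maxn n0 K.
have h1 := Hn0 n (leq_maxl _ _); cbv beta in h1.
have hK : (K <= phi n)%N := leq_trans (leq_maxr n0 K) (phi_ge _ Hphi n).
have := HK' (phi n) ltac:(by apply/leP).
rewrite Rabs_pos_eq; last by apply pow_le; lra.
move=> h2.
have := sim_iter Hs (phi n) y0 x; rewrite (iter_fix _ _ Hx) => e.
have h3 : r ^ phi n * edist y0 x < eps / 2.
  have := Rmult_lt_compat_r (edist y0 x) _ _ hy0 h2.
  have -> : eps / 2 / edist y0 x * edist y0 x = eps / 2 by field; lra.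
  done.
have := ed_tri x (iter (phi n) w y0) l; rewrite (ed_sym x (iter (phi n) w y0)) e; lra.
Qed.

Lemma Z_of {N} (w : pt N -> pt N) (F : pt N -> Prop) n p : F (iter n w p) -> Zset w F p.
Proof. move=> h eps he; exists p; split; first by exists n. by rewrite ed_refl. Qed.

Fixpoint best (P : nat -> Prop) (m : nat) : nat :=
  match m with
  | 0%N => 0%N
  | S m' => if excluded_middle_informative (P (S m')) then S m' else best P m'
  end.

Lemma best_spec (P : nat -> Prop) m j : (j <= m)%N -> P j -> (j <= best P m)%N /\ P (best P m).
Proof.
elim: m j => [|m IH] j hj Pj /=.
  by move: hj; rewrite leqn0 => /eqP e; subst j.
case: excluded_middle_informative => h; first by split.
have hj' : (j <= m)%N.
  move: hj; rewrite leq_eqVlt => /orP [/eqP e|//]; by subst j.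
exact: IH.
Qed.

Lemma trans_ex (P : nat -> Prop) K : P 0%N -> ~ P K -> exists k, P k /\ ~ P k.+1.
Proof.
move=> P0 PK; apply: NNPP => H; apply PK.
elim: K {PK} => // k IH; apply: NNPP => Hk; apply H; by exists k.
Qed.

Lemma scale_ex r t : 0 < r < 1 -> 1 <= t -> exists k, (/ r) ^ k <= t /\ t < (/ r) ^ k.+1.
Proof.
move=> hr ht.
have [K HK] := pow_lt_1_zero r ltac:(rewrite Rabs_pos_eq; lra) (/ t)
  ltac:(apply Rinv_0_lt_compat; lra).
have := HK K (Nat.le_refl _); rewrite Rabs_pos_eq; last by apply pow_le; lra.
move=> h.
have hK : ~ (/ r) ^ K <= t.
  rewrite pow_inv => h2.
  have hp : 0 < r ^ K by apply pow_lt; lra.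
  have := Rinv_le_contravar _ _ (Rinv_0_lt_compat _ hp) h2.
  rewrite Rinv_inv; lra.
have [k [h1 h2]] := trans_ex (fun k => (/ r) ^ k <= t) K ltac:(simpl; lra) hK.
exists k; split => //; lra.
Qed.

Lemma close_eq a b K : (forall eps, 0 < eps -> Rabs (a - b) <= K * eps) -> a = b.
Proof.
move=> H.
have hK : 0 <= K.
  have := H 1 Rlt_0_1; have := Rabs_pos (a - b); lra.
case: (Req_dec (a - b) 0) => h; first lra.
have hp : 0 < Rabs (a - b) by apply Rabs_pos_lt.
have := H (Rabs (a - b) / (2 * (K + 1))) ltac:(apply Rdiv_lt_0_compat; lra).
have -> : K * (Rabs (a - b) / (2 * (K + 1))) = Rabs (a - b) * (K / (2 * (K + 1))) by field; lra.
have : K / (2 * (K + 1)) < 1.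
  apply (Rmult_lt_reg_r (2 * (K + 1))); first lra.
  field_simplify; lra.
nra.
Qed.

Lemma scale_rel {N} {w wi : pt N -> pt N} {r} : simr w r -> (forall p, w (wi p) = p) ->
  forall t k a b, t * edist a b = (t * r ^ k) * edist (iter k wi a) (iter k wi b).
Proof.
move=> Hs Hwi t k a b.
rewrite -{1}(iter_inv Hwi k a) -{1}(iter_inv Hwi k b) (sim_iter Hs); ring.
Qed.

Lemma inv_le {i j} : (i <= j)%N -> / INR (S j) <= / INR (S i).
Proof.
move=> h; apply Rinv_le_contravar; first by apply lt_0_INR; lia.
apply le_INR; apply/leP; by rewrite ltnS.
Qed.

Lemma INR_le {i j} : (i <= j)%N -> INR (S i) <= INR (S j).
Proof. move=> h; apply le_INR; apply/leP; by rewrite ltnS. Qed.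

Lemma inv_le1 i : / INR (S i) <= 1.
Proof. rewrite -Rinv_1; apply Rinv_le_contravar; first lra. rewrite S_INR; have := pos_INR i; lra. Qed.

Lemma inv_pos i : 0 < / INR (S i).
Proof. apply Rinv_0_lt_compat, lt_0_INR; lia. Qed.

Lemma big_INR A : exists j0, forall j, (j0 <= j)%N -> A < INR (S j).
Proof.
have [K HK] := INR_archimed 1 A Rlt_0_1.
exists K => j hj; have := INR_le hj; rewrite S_INR; lra.
Qed.

Lemma abs_le2 {u e} : Rabs u <= e -> - e <= u <= e.
Proof. move=> h; have := Rle_abs u; have := Rle_abs (- u); rewrite Rabs_Ropp; lra. Qed.

Lemma abs_lt2 {u e} : Rabs u < e -> - e < u < e.
Proof. move=> h; have := Rle_abs u; have := Rle_abs (- u); rewrite Rabs_Ropp; lra. Qed.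

Lemma ed_tri3 {N} (a b c d : pt N) : edist a d <= edist a b + edist b c + edist c d.
Proof. have := ed_tri a b d; have := ed_tri b c d; lra. Qed.

Lemma mtri3 {Y : metric_space} (a b c d : Y) : mdist a d <= mdist a b + mdist b c + mdist c d.
Proof. have := mdist_tri a b d; have := mdist_tri b c d; lra. Qed.

Lemma max3 j1 j2 j3 : (j1 <= maxn j1 (maxn j2 j3))%N /\ (j2 <= maxn j1 (maxn j2 j3))%N /\
  (j3 <= maxn j1 (maxn j2 j3))%N.
Proof.
split; first exact: leq_maxl.
split; apply: leq_trans (leq_maxr _ _); [exact: leq_maxl|exact: leq_maxr].
Qed.

Definition Good {N} (F : pt N -> Prop) (x : pt N) {Y : metric_space} (q : Y)
  (tn : R) (j : nat) (f : pt N -> Y) : Prop :=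
  f x = q /\
  (forall a b, F a -> F b -> tn * edist x a < INR (S j) -> tn * edist x b < INR (S j) ->
     Rabs (mdist (f a) (f b) - tn * edist a b) < / INR (S j)) /\
  (forall y, mdist q y < INR (S j) - / INR (S j) ->
     exists a, F a /\ tn * edist x a < INR (S j) /\ mdist (f a) y < / INR (S j)).

Lemma Good_dist {N} {F : pt N -> Prop} {x} {Y : metric_space} {q : Y} {tn j f} j0 {a b} :
  Good F x q tn j f -> (j0 <= j)%N -> F a -> F b ->
  tn * edist x a < INR (S j0) -> tn * edist x b < INR (S j0) ->
  Rabs (mdist (f a) (f b) - tn * edist a b) < / INR (S j0).
Proof.
move=> [_ [Hd _]] hj Fa Fb ha hb.
have h1 := INR_le hj; have h2 := inv_le hj.
have := Hd a b Fa Fb ltac:(lra) ltac:(lra); lra.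
Qed.

Lemma Good_cover {N} {F : pt N -> Prop} {x} {Y : metric_space} {q : Y} {tn j f y} :
  Good F x q tn j f -> F x -> mdist q y < INR (S j) - 1 ->
  exists a, F a /\ tn * edist x a < INR (S j) /\ mdist (f a) y < / INR (S j) /\
    tn * edist x a <= mdist q y + 2.
Proof.
move=> [fx [Hd Hc]] Fx hy.
have h1 := inv_le1 j.
have [a [Fa [ha hfa]]] := Hc y ltac:(lra).
exists a; do 3 split => //.
have := Hd x a Fx Fa ltac:(rewrite ed_refl; have := INR_le (leq0n j); simpl; lra) ha.
rewrite fx => hd.
have := mdist_tri q y (f a); rewrite (mdist_sym y).
have := Rle_abs (mdist q (f a) - tn * edist x a).
have := Rabs_minus_sym (mdist q (f a)) (tn * edist x a).
have := Rle_abs (tn * edist x a - mdist q (f a)).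
lra.
Qed.

Lemma dir_fwd {U} (HU : isU U) {N} (w wi : pt N -> pt N) r x (F : pt N -> Prop)
  (Hs : simr w r) (Hwi : forall p, w (wi p) = p) (Hx : w x = x)
  (Hst : forall z, F z -> F (w z)) (Fx : F x)
  (Y : metric_space) (q : Y) :
  tangent_set F x q ->
  exists c : R, 0 < c /\ pointed_isometric_to_dilation (Zset w F) x c q.
Proof.
move=> [HY [t [Ht Hc]]].
have hr := proj1 Hs.
have HT1 : U (fun n => 1 <= t n).
  have [n0 Hn0] := Ht 1; apply: (U_cof HU); exists n0 => n hn; have := Hn0 n hn; lra.
pose ks n := epsilon (inhabits 0%N) (fun k => (/ r) ^ k <= t n /\ t n < (/ r) ^ k.+1).
have Hks : forall n, 1 <= t n -> (/ r) ^ (ks n) <= t n /\ t n < (/ r) ^ (ks n).+1.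
  move=> n hn; rewrite /ks; apply epsilon_spec; exact: scale_ex.
pose s n := t n * r ^ (ks n).
have Hs1 : forall n, 1 <= t n -> 1 <= s n /\ s n < / r.
  move=> n hn; have [h1 h2] := Hks n hn; rewrite /s.
  have hp : 0 < r ^ ks n by apply pow_lt; lra.
  rewrite pow_inv in h1; rewrite pow_inv /= in h2.
  split.
    have := Rmult_le_compat_r (r ^ ks n) _ _ (Rlt_le _ _ hp) h1.
    by rewrite Rinv_l; lra.
  have := Rmult_lt_compat_r (r ^ ks n) _ _ hp h2.
  rewrite Rinv_mult Rmult_assoc Rinv_l; lra.
have Hksj : forall j, U (fun n => (j <= ks n)%N).
  move=> j; have [n0 Hn0] := Ht ((/ r) ^ j).
  apply: (U_S HU _ (U_I HU HT1 (U_cof HU (ex_intro _ n0 Hn0)))) => n [h1 h2].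
  have [_ h3] := Hks n h1.
  case: (leqP j (ks n)) => // h4; exfalso.
  have : (/ r) ^ (ks n).+1 <= (/ r) ^ j.
    apply Rle_pow; last by apply/leP.
    rewrite -Rinv_1; apply Rinv_le_contravar; lra.
  lra.
have [c Hcs] : exists c, forall eps, 0 < eps -> U (fun n => Rabs (s n - c) < eps).
  apply: (ulim_R HU s (/ r)); apply: (U_S HU _ HT1) => n hn.
  have [h1 h2] := Hs1 n hn; rewrite Rabs_pos_eq; lra.
have hc1 : 1 <= c.
  case: (Rle_lt_dec 1 c) => // hc.
  have [n [h1 h2]] := U_ne HU (U_I HU HT1 (Hcs (1 - c) ltac:(lra))).
  have := Hs1 n h1; have := Rle_abs (s n - c); lra.
exists c; split; first lra.
have HG : forall j, exists n0, forall n, (n0 <= n)%N -> exists f, Good F x q (t n) j f.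
  move=> j; have [n0 Hn0] := Hc (INR (S j)) (/ INR (S j)) ltac:(apply lt_0_INR; lia) (inv_pos j).
  exists n0 => n hn; have [f Hf] := Hn0 n hn; exists f; exact Hf.
pose J n := best (fun j => exists f, Good F x q (t n) j f) n.
pose f n := epsilon (inhabits (fun _ : pt N => q)) (Good F x q (t n) (J n)).
have HJ : forall j0, U (fun n => (j0 <= J n)%N /\ Good F x q (t n) (J n) (f n)).
  move=> j0; have [n0 Hn0] := HG j0.
  apply: (U_cof HU); exists (maxn n0 j0) => n hn.
  have [h1 h2] := best_spec (fun j => exists f, Good F x q (t n) j f) n j0
     (leq_trans (leq_maxr _ _) hn) (Hn0 n (leq_trans (leq_maxl _ _) hn)).
  split => //; rewrite /f; apply epsilon_spec; exact h2.
pose A n y := epsilon (inhabits x) (fun a => F a /\ t n * edist x a < INR (S (J n)) /\ mdist (f n a) y < / INR (S (J n)) /\ t n * edist x a <= mdist q y + 2).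
pose zz n y := iter (ks n) wi (A n y).
have HA : forall y j0, mdist q y + 3 < INR (S j0) ->
  U (fun n => (j0 <= J n)%N /\ Good F x q (t n) (J n) (f n) /\ 1 <= s n /\ F (A n y) /\ mdist (f n (A n y)) y < / INR (S j0) /\ t n * edist x (A n y) <= mdist q y + 2 /\ t n * edist x (A n y) = s n * edist x (zz n y) /\ edist x (zz n y) <= mdist q y + 2 /\ F (iter (ks n) w (zz n y))).
  move=> y j0 hj0.
  apply: (U_S HU _ (U_I HU (HJ j0) HT1)) => n [[hJ HGd] h1].
  have hspec : F (A n y) /\ t n * edist x (A n y) < INR (S (J n)) /\ mdist (f n (A n y)) y < / INR (S (J n)) /\ t n * edist x (A n y) <= mdist q y + 2.
    rewrite /A; apply epsilon_spec; apply: (Good_cover HGd Fx).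
    have := INR_le hJ; lra.
  have [FA [hA1 [hA2 hA3]]] := hspec.
  have [hs1 hs2] := Hs1 n h1.
  have e : t n * edist x (A n y) = s n * edist x (zz n y).
    by rewrite (scale_rel Hs Hwi (t n) (ks n)) (wi_fix Hs Hwi Hx).
  have := inv_le hJ => hi.
  refine (conj hJ (conj HGd (conj hs1 (conj FA (conj _ (conj hA3 (conj e (conj _ _)))))))).
  - lra.
  - have := ed_ge0 x (zz n y); nra.
  - by rewrite /zz iter_inv.
pose g y := epsilon (inhabits x) (fun l => forall eps, 0 < eps -> U (fun n => edist (zz n y) l < eps)).
have Hg : forall y eps, 0 < eps -> U (fun n => edist (zz n y) (g y) < eps).
  move=> y; rewrite /g; apply epsilon_spec.
  have [j0 Hj0] := big_INR (mdist q y + 3).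
  apply: (ulim_RN HU _ x (mdist q y + 2)).
  by apply: (U_S HU _ (HA y j0 (Hj0 j0 (leqnn _)))) => n [_ [_ [_ [_ [_ [_ [_ [h _]]]]]]]].
have Hiso : forall y y', mdist y y' = c * edist (g y) (g y').
  move=> y y'.
  set B := mdist q y + mdist q y' + 4.
  have hB : 0 <= B.
    have := mdist_ge0 q y; have := mdist_ge0 q y'; rewrite /B; lra.
  apply: (close_eq _ _ (3 + B + 2 * c)) => eps he.
  have [j1 Hj1] := big_INR (mdist q y + 3).
  have [j2 Hj2] := big_INR (mdist q y' + 3).
  have [j3 Hj3] := inv_small eps he.
  have [m1 [m2 m3]] := max3 j1 j2 j3.
  set j0 := maxn j1 (maxn j2 j3) in m1 m2 m3.
  have hj1 := Hj1 j0 m1; have hj2 := Hj2 j0 m2; have hinv := Hj3 j0 m3.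
  have [n [[hJ [HGd [hs1 [FA [hA2 [hA3 [e [hz _]]]]]]]] [[_ [_ [_ [FA' [hA2' [hA3' [e' [hz' _]]]]]]]] [[hg hg'] hsc]]]] :=
    U_ne HU (U_I HU (HA y j0 hj1) (U_I HU (HA y' j0 hj2) (U_I HU (U_I HU (Hg y eps he) (Hg y' eps he)) (Hcs eps he)))).
  have hd := Good_dist j0 HGd hJ FA FA' ltac:(lra) ltac:(lra).
  have esc := scale_rel Hs Hwi (t n) (ks n) (A n y) (A n y').
  rewrite -/(s n) -/(zz n y) -/(zz n y') in esc.
  set a := A n y in hd hA2 esc; set a' := A n y' in hd hA2' esc.
  set z := zz n y in hg hz esc; set z' := zz n y' in hg' hz' esc.
  set D := edist z z'; set D' := edist (g y) (g y').
  have t1 := mtri3 y (f n a) (f n a') y'.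
  have t2 := mtri3 (f n a) y y' (f n a').
  rewrite (mdist_sym y (f n a)) in t1; rewrite (mdist_sym y' (f n a')) in t2.
  have u1 := ed_tri3 (g y) z z' (g y'); rewrite (ed_sym (g y) z) -/D -/D' in u1.
  have u2 := ed_tri3 z (g y) (g y') z'; rewrite (ed_sym (g y') z') -/D -/D' in u2.
  have u3 := ed_tri z x z'; rewrite (ed_sym z x) -/D in u3.
  have hD0 : 0 <= D := ed_ge0 z z'.
  have hDB : D <= B by rewrite /B; lra.
  have [hsc1 hsc2] := abs_lt2 hsc.
  have [hd1 hd2] := abs_lt2 hd.
  have k1 : - (eps * B) <= (s n - c) * D <= eps * B.
    split; nra.
  have k2 : - (c * (2 * eps)) <= c * (D - D') <= c * (2 * eps).
    split; nra.
  have -> : mdist y y' - c * D' = (mdist y y' - mdist (f n a) (f n a'))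
      + (mdist (f n a) (f n a') - t n * edist a a') + (s n - c) * D + c * (D - D').
    rewrite esc -/D; ring.
  apply Rabs_le; split; nra.
have Hgq : g q = x.
  apply: ed_small0 => eps he.
  have [j1 Hj1] := big_INR (mdist q q + 3).
  have [j3 Hj3] := inv_small (eps / 3) ltac:(lra).
  have hj1 := Hj1 (maxn j1 j3) (leq_maxl _ _).
  have hinv := Hj3 (maxn j1 j3) (leq_maxr _ _).
  have [n [[hJ [HGd [hs1 [FA [hA2 [hA3 [e [hz _]]]]]]]] hg]] :=
    U_ne HU (U_I HU (HA q _ hj1) (Hg q (eps / 3) ltac:(lra))).
  have hd := Good_dist (maxn j1 j3) HGd hJ Fx FA
    ltac:(rewrite ed_refl Rmult_0_r; apply lt_0_INR; lia) ltac:(lra).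
  have [fx _] := HGd.
  rewrite fx in hd.
  have [hd1 hd2] := abs_lt2 hd.
  have h0 := ed_ge0 x (zz n q).
  have hzx : edist x (zz n q) < 2 * (eps / 3).
    have : s n * edist x (zz n q) < 2 * (eps / 3).
      rewrite -e; have := mdist_sym q (f n (A n q)); lra.
    nra.
  have := ed_tri (g q) (zz n q) x; rewrite (ed_sym (g q) (zz n q)) (ed_sym (zz n q) x); lra.
have HgZ : forall y, Zset w F (g y).
  move=> y eps he.
  have [j1 Hj1] := big_INR (mdist q y + 3).
  have [n [[_ [_ [_ [_ [_ [_ [_ [_ hF]]]]]]]] hg]] :=
    U_ne HU (U_I HU (HA y _ (Hj1 j1 (leqnn _))) (Hg y eps he)).
  exists (zz n y); split; first by exists (ks n).
  by rewrite ed_sym.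
have Hsurj : forall z, Zset w F z -> exists y, g y = z.
  move=> z Hz.
  have H1 : forall i, exists pj : pt N * nat, F (iter pj.2 w pj.1) /\ edist z pj.1 < / INR (S i).
    move=> i; have [p [[j Hj] hp]] := Hz (/ INR (S i)) (inv_pos i); by exists (p, j).
  pose pp i := (proj1_sig (constructive_indefinite_description _ (H1 i))).1.
  pose jj i := (proj1_sig (constructive_indefinite_description _ (H1 i))).2.
  have Hpp : forall i, F (iter (jj i) w (pp i)) /\ edist z (pp i) < / INR (S i).
    move=> i; exact: (proj2_sig (constructive_indefinite_description _ (H1 i))).
  pose I m := best (fun i => (jj i <= ks m)%N) m.
  have HI : forall i0, U (fun m => (i0 <= I m)%N /\ (jj (I m) <= ks m)%N).
    move=> i0.
    have hc0 : U (fun m => is_true (i0 <= m)%N) by apply: (U_cof HU); exists i0.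
    apply: (U_S HU _ (U_I HU (Hksj (jj i0)) hc0)) => m [h1 h2].
    exact: (best_spec (fun i => (jj i <= ks m)%N) m i0 h2 h1).
  pose b m := iter (ks m) w (pp (I m)).
  set R0 := / r * (edist x z + 1).
  set B2 := R0 + 2.
  have hR0 : 0 <= R0.
    have := ed_ge0 x z; have : 0 < / r by apply Rinv_0_lt_compat; lra.
    rewrite /R0; nra.
  have Hbm : forall m, 1 <= t m -> (jj (I m) <= ks m)%N ->
      F (b m) /\ t m * edist x (b m) < R0 /\
      (forall a, t m * edist a (b m) = s m * edist (iter (ks m) wi a) (pp (I m))).
    move=> m h1 h2.
    have Fb : F (b m) by apply: (iter_mono Hst (jj (I m))); [|apply Hpp].
    have e1 : forall a, t m * edist a (b m) = s m * edist (iter (ks m) wi a) (pp (I m)).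
      by move=> a; rewrite (scale_rel Hs Hwi (t m) (ks m)) /b (iter_inv2 Hs Hwi).
    split => //; split; last exact: e1.
    rewrite e1 (wi_fix Hs Hwi Hx).
    have [hs1 hs2] := Hs1 m h1.
    have := ed_tri x z (pp (I m)).
    have := (Hpp (I m)).2; have := inv_le1 (I m).
    have := ed_ge0 x (pp (I m)).
    rewrite /R0 => ha hb hc hd.
    have : s m * edist x (pp (I m)) <= s m * (edist x z + 1) by apply Rmult_le_compat_l; lra.
    have : s m * (edist x z + 1) < / r * (edist x z + 1).
      apply Rmult_lt_compat_r => //; have := ed_ge0 x z; lra.
    lra.
  pose ym m := f m (b m).
  pose ym' m := if Rle_dec (mdist q (ym m)) B2 then ym m else q.
  have Hb : forall m, mdist q (ym' m) <= B2.
    move=> m; rewrite /ym'; case: Rle_dec => [hh|hh] //.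
    rewrite (proj2 (mdist_eq0 q q) erefl) /B2; lra.
  have [ys Hys] := ulim_Y HU Y HY ym' q B2 Hb.
  exists ys; apply: ed_small0 => eps he.
  set e5 := eps / 5.
  have he5 : 0 < e5 by rewrite /e5; lra.
  have [j1 Hj1] := big_INR (mdist q ys + 3).
  have [j2 Hj2] := big_INR R0.
  have [j3 Hj3] := inv_small e5 he5.
  have [m1 [m2 m3]] := max3 j1 j2 j3.
  set j0 := maxn j1 (maxn j2 j3) in m1 m2 m3.
  have hj1 := Hj1 j0 m1; have hj2 := Hj2 j0 m2; have hinv := Hj3 j0 m3.
  have [m [[hJ [HGd [hs1 [FA [hA2 [hA3 [e [hz _]]]]]]]] [[hI1 hI2] [hy [hg h1t]]]]] :=
    U_ne HU (U_I HU (HA ys j0 hj1) (U_I HU (HI j3) (U_I HU (Hys e5 he5) (U_I HU (Hg ys e5 he5) HT1)))).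
  have [Fb [hbR eb]] := Hbm m h1t hI2.
  have hinv1 := inv_le1 j0.
  have hdq := Good_dist j0 HGd hJ Fx Fb ltac:(rewrite ed_refl Rmult_0_r; apply lt_0_INR; lia) ltac:(lra).
  have [fx _] := HGd; rewrite fx in hdq.
  have [hdq1 hdq2] := abs_lt2 hdq.
  have eym : ym' m = f m (b m).
    rewrite /ym'; case: Rle_dec => // hn; exfalso; apply: hn; rewrite /ym /B2; lra.
  rewrite eym in hy.
  have hd := Good_dist j0 HGd hJ FA Fb ltac:(lra) ltac:(lra).
  have [hd1 hd2] := abs_lt2 hd.
  rewrite eb -/(zz m ys) in hd1 hd2.
  have t1 := mdist_tri (f m (A m ys)) ys (f m (b m)).
  rewrite (mdist_sym ys (f m (b m))) in t1.
  have hzp : s m * edist (zz m ys) (pp (I m)) < 3 * e5 by lra.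
  have hzp' : edist (zz m ys) (pp (I m)) < 3 * e5.
    have := ed_ge0 (zz m ys) (pp (I m)); nra.
  have hpz : edist z (pp (I m)) < e5.
    have := (Hpp (I m)).2; have := inv_le hI1; have := Hj3 j3 (leqnn _); lra.
  have := ed_tri3 (g ys) (zz m ys) (pp (I m)) z.
  rewrite (ed_sym (g ys) (zz m ys)) (ed_sym (pp (I m)) z).
  rewrite /e5 in hg hzp' hpz; lra.
exists g; split => //; split => //; split => //.
Qed.

Lemma tn_infty r c : 0 < r < 1 -> 0 < c ->
  forall M, exists n0, forall n, (n0 <= n)%N -> M < c * (/ r) ^ n.
Proof.
move=> hr hc M.
have [K HK] := pow_lt_1_zero r ltac:(rewrite Rabs_pos_eq; lra) (c / (Rabs M + 1))
  ltac:(apply Rdiv_lt_0_compat; [lra|have := Rabs_pos M; lra]).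
exists K => n hn.
have := HK n ltac:(by apply/leP).
rewrite Rabs_pos_eq; last by apply pow_le; lra.
move=> h.
have hp : 0 < r ^ n by apply pow_lt; lra.
rewrite pow_inv.
have hM := Rle_abs M.
have hA : 0 < Rabs M + 1 by have := Rabs_pos M; lra.
have : r ^ n * (Rabs M + 1) < c.
  have := Rmult_lt_compat_r (Rabs M + 1) _ _ hA h.
  have -> : c / (Rabs M + 1) * (Rabs M + 1) = c by field; lra.
  done.
move=> h2.
apply (Rmult_lt_reg_r (r ^ n)) => //.
rewrite Rmult_assoc Rinv_l; [nra|lra].
Qed.

Lemma dir_back {N} (w wi : pt N -> pt N) r x (F : pt N -> Prop)
  (Hs : simr w r) (Hwi : forall p, w (wi p) = p) (Hx : w x = x)
  (Hst : forall z, F z -> F (w z)) (Fx : F x)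
  (Y : metric_space) (q : Y) :
  proper_space Y -> (exists c : R, 0 < c /\ pointed_isometric_to_dilation (Zset w F) x c q) ->
  tangent_set F x q.
Proof.
move=> HY [c [hc [g [gq [gZ [gsurj gd]]]]]].
have hr := proj1 Hs.
split => //.
exists (fun n => c * (/ r) ^ n); split; first exact: tn_infty.
move=> R eps hR he.
pose good n := forall y : Y, mdist q y < R - eps ->
   exists p, F (iter n w p) /\ c * edist (g y) p < eps.
have [n0 Hn0] : exists n0, forall n, (n0 <= n)%N -> good n.
  apply: NNPP => Hno.
  have mono : forall n n', (n <= n')%N -> good n -> good n'.
    move=> n n' hn Hg y hy; have [p [hp1 hp2]] := Hg y hy.
    by exists p; split => //; apply: (iter_mono Hst n).
  have bad : forall n, exists y : Y, mdist q y < R - eps /\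
      forall p, F (iter n w p) -> eps <= c * edist (g y) p.
    move=> n; apply: NNPP => Hb; apply: Hno; exists n => n' hn'.
    apply: (mono n) => // y hy; apply: NNPP => Hp; apply: Hb; exists y; split => //.
    move=> p hp; case: (Rle_lt_dec eps (c * edist (g y) p)) => // h.
    by exfalso; apply Hp; exists p.
  pose ys n := proj1_sig (constructive_indefinite_description _ (bad n)).
  have Hys : forall n, mdist q (ys n) < R - eps /\
      forall p, F (iter n w p) -> eps <= c * edist (g (ys n)) p.
    move=> n; exact: (proj2_sig (constructive_indefinite_description _ (bad n))).
  have Hyb : forall n, mdist q (ys n) <= R by move=> n; have := proj1 (Hys n); lra.
  have [phi [l [Hphi Hl]]] := HY q R ys Hyb.
  have [p [[j Hj] Hp]] := gZ l (eps / (2 * c)) ltac:(apply Rdiv_lt_0_compat; lra).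
  have [n1 Hn1] := Hl (eps / 2) ltac:(lra).
  set n := maxn n1 j.
  have h1 := Hn1 n (leq_maxl _ _).
  have hj : (j <= phi n)%N := leq_trans (leq_maxr n1 j) (phi_ge _ Hphi n).
  have h2 := proj2 (Hys (phi n)) p (iter_mono Hst j _ p hj Hj).
  have h3 := ed_tri (g (ys (phi n))) (g l) p.
  have h4 := gd (ys (phi n)) l.
  have h5 : c * edist (g l) p < eps / 2.
    have := Rmult_lt_compat_l c _ _ hc Hp.
    have -> : c * (eps / (2 * c)) = eps / 2 by field; lra.
    done.
  nra.
exists n0 => n hn.
pose f := fun a => epsilon (inhabits q) (fun y => g y = iter n wi a).
have Hf : forall a, F a -> g (f a) = iter n wi a.
  move=> a Fa; rewrite /f; apply epsilon_spec; apply: gsurj.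
  by apply: (Z_of _ _ n); rewrite iter_inv.
have gx : forall n, iter n wi x = x := wi_fix Hs Hwi Hx.
have hrn : 0 < r ^ n by apply pow_lt; lra.
have Hdist : forall a b, F a -> F b -> c * (/ r) ^ n * edist a b = mdist (f a) (f b).
  move=> a b Fa Fb; rewrite gd Hf // Hf //.
  rewrite -{1}(iter_inv Hwi n a) -{1}(iter_inv Hwi n b) (sim_iter Hs) pow_inv.
  field; lra.
exists f; split; [|split].
- apply/(mdist_eq0 (f x) q); rewrite gd Hf // gx gq ed_refl; ring.
- move=> a b Fa Fb _ _; rewrite (Hdist a b Fa Fb) Rminus_diag Rabs_R0 //.
- move=> y hy.
  have [p [Fp Hp]] := Hn0 n hn y hy.
  exists (iter n w p); split => //; split.
    have := Hdist x (iter n w p) Fx Fp.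
    move=> ->; rewrite gd Hf // Hf // (iter_inv2 Hs Hwi) gx.
    have := ed_tri x (g y) p.
    have := gd q y; rewrite gq => e.
    nra.
  rewrite gd Hf // (iter_inv2 Hs Hwi) ed_sym; lra.
Qed.

Lemma ultra_exists : exists U : (nat -> Prop) -> Prop, isU U.
Proof.
have [G [GU sFG]] := filter.ultraFilterLemma (@filter.eventually_filter).
exists G.
have GF : filter.ProperFilter G by case: GU.
split; first exact: (@filter.filterT _ G _).
split; first by move=> A B HA HB; exact: (filter.filterI HA HB).
split; first by move=> A B AB HA; exact: (filter.filterS AB HA).
split; first by move=> H; apply: (@filter.filter_not_empty _ G _); exact: H.
split; first by move=> A; case: (filter.in_ultra_setVsetC A GU) => H; [left|right].
move=> A [n0 Hn0]; apply: sFG; exists n0 => //.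
Qed.

Theorem theorem2p6 (N m : nat) (ws : 'I_m -> pt N -> pt N) (F : pt N -> Prop)
  (Hsim : forall i, contracting_similarity (ws i))
  (HF : is_attractor ws F)
  (k : 'I_m) (x : pt N) (Hx : ws k x = x) :
  forall (Y : metric_space) (q : Y),
    tangent_set F x q <->
    (proper_space Y /\ exists c : R, 0 < c /\
       pointed_isometric_to_dilation (Zset (ws k) F) x c q).
Proof.
move=> Y q.
have [U HU] := ultra_exists.
have [r [hr Hw]] := Hsim k.
have Hs : simr (ws k) r by split.
have [Hne [Hcpt Heq]] := HF.
have Hst : forall z, F z -> F (ws k z).
  move=> z Fz; apply/Heq; by exists k, z.
have Fx : F x := x_in_F _ _ _ _ Hs Hx Hne Hcpt Hst.
have Hsurj := sim_surj HU _ _ _ Hs Hx.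
pose wi p := epsilon (inhabits p) (fun z => ws k z = p).
have Hwi : forall p, ws k (wi p) = p.
  by move=> p; rewrite /wi; apply epsilon_spec; apply Hsurj.
split.
  move=> HT; split; first exact: (proj1 HT).
  exact: (dir_fwd HU _ _ _ _ _ Hs Hwi Hx Hst Fx Y q HT).
move=> [HY Hc]; exact: (dir_back _ _ _ _ _ Hs Hwi Hx Hst Fx Y q HY Hc).
Qed.
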